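(* Let $\mathcal{L}:\mathbb{R}^d\to\mathbb{R}$ be differentiable on $\mathbb{R}^d\setminus\{\mathbf{0}\}$ and radially invariant ($\mathcal{L}(\rho\mathbf{x})=\mathcal{L}(\mathbf{x})$ for all $\rho>0$). Consider the generic optimization scheme $$\mathbf{x}_{k+1}=\mathbf{x}_k-\eta_k\,\mathbf{a}_k\oslash\mathbf{b}_k,\qquad \mathbf{a}_k=\beta\mathbf{a}_{k-1}+\nabla\mathcal{L}(\mathbf{x}_k)+\lambda\mathbf{x}_k,$$ with $\eta_k>0$, $\beta,\lambda\in\mathbb{R}$, $\mathbf{a}_{-1}=\mathbf{0}$, and $\mathbf{b}_k\in\mathbb{R}^d$ having all entries nonzero. Fix a step $k$ with $\mathbf{x}_k\neq\mathbf{0}$, write $r_k=\|\mathbf{x}_k\|$, $\mathbf{u}_k=\mathbf{x}_k/r_k$, and define $$\mathbf{c}_k=r_k\,\mathbf{a}_k\oslash\frac{\mathbf{b}_k}{d^{-1/2}\|\mathbf{b}_k\|},\qquad A_k=\frac{\eta_k}{r_k^2\,d^{-1/2}\|\mathbf{b}_k\|},\qquad \eta^e_k=A_k\bigl(1-A_k\langle\mathbf{c}_k,\mathbf{u}_k\rangle\bigr)^{-1},$$ and $\mathbf{c}_k^{\perp}=\mathbf{c}_k-\langle\mathbf{c}_k,\mathbf{u}_k\rangle\mathbf{u}_k$. Assume $1-A_k\langle\mathbf{c}_k,\mathbf{u}_k\rangle>0$. Then $\mathbf{x}_{k+1}\neq\mathbf{0}$, and with $\mathbf{u}_{k+1}=\mathbf{x}_{k+1}/\|\mathbf{x}_{k+1}\|$,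 $$\mathbf{u}_{k+1}=\frac{\mathbf{u}_k-\eta^e_k\mathbf{c}_k^{\perp}}{\sqrt{1+(\eta^e_k\|\mathbf{c}_k^{\perp}\|)^2}};$$ moreover $$\mathbf{u}_{k+1}=\operatorname{Exp}_{\mathbf{u}_k}\!\Bigl(-\bigl[1+O\bigl((\eta^e_k\|\mathbf{c}_k^{\perp}\|)^2\bigr)\bigr]\eta^e_k\mathbf{c}_k^{\perp}\Bigr),$$ where the bracketed scalar factor is $1+O(z^2)$ as $z=\eta^e_k\|\mathbf{c}_k^{\perp}\|\to 0$.
   Context: $\oslash$ denotes element-wise (Hadamard) division, $\|\cdot\|$ the Euclidean norm, $\langle\cdot,\cdot\rangle$ the Euclidean inner product. $\mathcal{S}_{d-1}=\{\mathbf{u}\in\mathbb{R}^d:\|\mathbf{u}\|=1\}$ is the unit sphere with its canonical (angular) metric, and $\operatorname{Exp}_{\mathbf{u}}$ is its exponential map at $\mathbf{u}$: for $\mathbf{w}$ tangent at $\mathbf{u}$ ($\langle\mathbf{w},\mathbf{u}\rangle=0$), $\operatorname{Exp}_{\mathbf{u}}(\mathbf{w})=\cos(\|\mathbf{w}\|)\mathbf{u}+\sin(\|\mathbf{w}\|)\mathbf{w}/\|\mathbf{w}\|$ (and $\operatorname{Exp}_{\mathbf{u}}(\mathbf{0})=\mathbf{u}$). *)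

(* Defs.v *)
From HB Require Import structures.
From mathcomp Require Import all_boot all_order all_algebra.
From mathcomp Require Import all_classical all_reals all_analysis.
Set Implicit Arguments. Unset Strict Implicit. Unset Printing Implicit Defensive.
Import Order.TTheory GRing.Theory Num.Theory.
Import numFieldNormedType.Exports.
Local Open Scope ring_scope.

Section Defs.
Variables (R : realType) (d : nat).

(* Euclidean inner product and norm on R^d = 'rV[R]_d
   (the library's norm on matrices is the max norm, so we define these). *)
Definition dotp (u v : 'rV[R]_d) : R := \sum_(i < d) u 0 i * v 0 i.
Definition enorm (u : 'rV[R]_d) : R := Num.sqrt (dotp u u).

Definition hdiv (a b : 'rV[R]_d) : 'rV[R]_d := \row_(i < d) (a 0 i / b 0 i).

Definition grad (L : 'rV[R]_d -> R) (x : 'rV[R]_d) : 'rV[R]_d :=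
  \row_(i < d) ('D_(delta_mx 0 i) L x).

Definition sphExp (u w : 'rV[R]_d) : 'rV[R]_d :=
  if w == 0 then u
  else cos (enorm w) *: u + (sin (enorm w) / enorm w) *: w.
End Defs.

(* Main.v *)
Require Import Defs.
From HB Require Import structures.
From mathcomp Require Import all_boot all_order all_algebra.
From mathcomp Require Import all_classical all_reals all_analysis.
From mathcomp Require Import ring lra.
Import Order.TTheory GRing.Theory Num.Theory.
Import numFieldNormedType.Exports.
Local Open Scope ring_scope.
Lemma atan_pos_bound (R : realType) (z : R) : 0 < z -> `|atan z - z| <= z ^+ 3.
Proof.
move=> z0.
have [c /andP[c0 cz] E] : exists2 c, c \in `]0, z[ & atan z - atan 0 = (1 + c ^+ 2)^-1 * (z - 0).
  apply: (@MVT R atan (fun t => (1 + t ^+ 2)^-1)) => //.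
  - apply: continuous_subspaceT => t; exact: continuous_atan.
move: E; rewrite atan0 !subr0 => ->.
have h1 : 0 < 1 + c ^+ 2 by rewrite ltr_pwDl // sqr_ge0.
have -> : (1 + c ^+ 2)^-1 * z - z = - (c ^+ 2 / (1 + c ^+ 2) * z).
  by field; rewrite gt_eqF.
rewrite normrN ger0_norm; last by rewrite mulr_ge0 // ?divr_ge0 ?sqr_ge0 ?ltW.
rewrite [z ^+ 3]exprSr ler_pM2r // ler_pdivrMr //.
have : c ^+ 2 <= z ^+ 2 by rewrite lerXn2r // ?ltW // nnegrE ltW.
have : 0 <= c ^+ 2 * z ^+ 2 by rewrite mulr_ge0 // sqr_ge0.
nra.
Qed.

Lemma atan_bound (R : realType) (z : R) : `|atan z - z| <= `|z| ^+ 3.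
Proof.
case: (ltgtP z 0) => [zn|zp|->].
- have := @atan_pos_bound R (- z); rewrite oppr_gt0 => /(_ zn).
  by rewrite atanN -opprD normrN (ltr0_norm zn).
- by rewrite (gtr0_norm zp); apply: atan_pos_bound.
- by rewrite atan0 subr0 normr0 expr0n.
Qed.

Section V.
Context {R : realType} {d : nat}.
Implicit Types (u v w : 'rV[R]_d) (k : R).

Lemma dotpC u v : dotp u v = dotp v u.
Proof. by apply: eq_bigr => i _; rewrite mulrC. Qed.
Lemma dotpDl u v w : dotp (u + v) w = dotp u w + dotp v w.
Proof. by rewrite /dotp -big_split; apply: eq_bigr => i _; rewrite mxE mulrDl. Qed.
Lemma dotpNl u w : dotp (- u) w = - dotp u w.
Proof. by rewrite /dotp -sumrN; apply: eq_bigr => i _; rewrite mxE mulNr. Qed.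
Lemma dotpZl k u w : dotp (k *: u) w = k * dotp u w.
Proof. by rewrite /dotp mulr_sumr; apply: eq_bigr => i _; rewrite mxE mulrA. Qed.
Lemma dotpBl u v w : dotp (u - v) w = dotp u w - dotp v w.
Proof. by rewrite dotpDl dotpNl. Qed.
Lemma dotpDr u v w : dotp w (u + v) = dotp w u + dotp w v.
Proof. by rewrite dotpC dotpDl !(dotpC w). Qed.
Lemma dotpBr u v w : dotp w (u - v) = dotp w u - dotp w v.
Proof. by rewrite dotpC dotpBl !(dotpC w). Qed.
Lemma dotpZr k u w : dotp w (k *: u) = k * dotp w u.
Proof. by rewrite dotpC dotpZl dotpC. Qed.
Lemma dotp_ge0 u : 0 <= dotp u u.
Proof. by apply: sumr_ge0 => i _; rewrite -expr2 sqr_ge0. Qed.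
Lemma enorm_sqr u : enorm u ^+ 2 = dotp u u.
Proof. by rewrite /enorm sqr_sqrtr // dotp_ge0. Qed.
Lemma enorm0 : enorm (0 : 'rV[R]_d) = 0.
Proof. by rewrite /enorm /dotp big1 ?sqrtr0 // => i _; rewrite mxE mul0r. Qed.
Lemma enorm_ge0 u : 0 <= enorm u.
Proof. exact: sqrtr_ge0. Qed.
Lemma enormZ k u : enorm (k *: u) = `|k| * enorm u.
Proof.
by rewrite /enorm dotpZl dotpZr mulrA -expr2 sqrtrM ?sqr_ge0 // sqrtr_sqr.
Qed.
Lemma enorm_gt0 u : u != 0 -> 0 < enorm u.
Proof.
move=> u0; rewrite /enorm sqrtr_gt0 lt_def dotp_ge0 andbT.
apply: contra u0 => /eqP /psumr_eq0P H; apply/eqP/rowP => i.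
have := H (fun j _ => (let t := sqr_ge0 (u 0 j) in t)) i isT.
by rewrite mxE => /eqP; rewrite mulf_eq0 orbb => /eqP.
Qed.
End V.

Theorem theorem2 (R : realType) :
  exists phi : R -> R,
    (fun z => phi z - 1) =O_ (nbhs (0 : R)) (fun z => z ^+ 2) /\
  forall (d : nat) (L : 'rV[R]_d -> R)
    (x a b : nat -> 'rV[R]_d) (eta : nat -> R) (beta lambda : R),
    (forall y : 'rV[R]_d, y != 0 -> differentiable L y) ->
    (forall (rho : R) (y : 'rV[R]_d), 0 < rho -> L (rho *: y) = L y) ->
    (forall k, 0 < eta k) ->
    (forall k (i : 'I_d), b k 0 i != 0) ->
    a 0%N = grad L (x 0%N) + lambda *: x 0%N ->
    (forall k, a k.+1 = beta *: a k + grad L (x k.+1) + lambda *: x k.+1) ->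
    (forall k, x k.+1 = x k - eta k *: hdiv (a k) (b k)) ->
  forall k : nat, x k != 0 ->
    let r := enorm (x k) in
    let u := r^-1 *: x k in
    let s := (Num.sqrt (d%:R))^-1 * enorm (b k) in
    let c := r *: hdiv (a k) (s^-1 *: b k) in
    let A := eta k / (r ^+ 2 * s) in
    let etae := A * (1 - A * dotp c u)^-1 in
    let cperp := c - dotp c u *: u in
    0 < 1 - A * dotp c u ->
    x k.+1 != 0 /\
    let u' := (enorm (x k.+1))^-1 *: x k.+1 in
    u' = (Num.sqrt (1 + (etae * enorm cperp) ^+ 2))^-1 *: (u - etae *: cperp) /\
    u' = sphExp u (- ((phi (etae * enorm cperp) * etae) *: cperp)).
Proof.
exists (fun z => if z == 0 then 1 else atan z / z); split.
  apply/eqO_exP; exists 1 => //; apply: nearW => z /=.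
  case: eqP => [->|/eqP z0]; first by rewrite subrr normr0 mul1r normr_ge0.
  have -> : atan z / z - 1 = (atan z - z) / z by field.
  rewrite normrM normfV mul1r normrX ler_pdivrMr ?normr_gt0 //.
  by rewrite -exprSr; apply: atan_bound.
move=> d L x a b eta beta lambda _ _ eta0 b0 _ _ step k xk0 r u s c A etae cperp hm.
have [i xi0] : exists i : 'I_d, x k 0 i != 0.
  apply/existsP; apply: contraR xk0 => /existsPn H; apply/eqP/rowP => j.
  by rewrite mxE; apply/eqP; have := H j; rewrite negbK.
have hr : 0 < r by apply: enorm_gt0.
have hd : 0 < Num.sqrt (d%:R : R).
  by rewrite sqrtr_gt0 ltr0n (leq_ltn_trans (leq0n i) (ltn_ord i)).
have hb : b k != 0.
  by apply/eqP => /rowP/(_ i); rewrite !mxE; apply/eqP; exact: b0.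
have hs : 0 < s by rewrite /s mulr_gt0 ?invr_gt0 // enorm_gt0.
have hA : 0 < A by rewrite /A divr_gt0 // mulr_gt0 // exprn_gt0.
have he : 0 < etae by rewrite /etae mulr_gt0 // invr_gt0.
have hxu : x k = r *: u by rewrite /u scalerA mulfV ?gt_eqF // scale1r.
have hc : hdiv (a k) (b k) = (r * s)^-1 *: c.
  apply/rowP => j; rewrite /c !mxE.
  have := b0 k j; have := gt_eqF hr; have := gt_eqF hs => h1 h2 h3.
  by field; rewrite ?h1 ?h2 ?h3.
have huu : dotp u u = 1.
  rewrite /u dotpZl dotpZr -enorm_sqr -/r.
  by field; rewrite gt_eqF.
clearbody c u.
have hcp : dotp u cperp = 0.
  by rewrite /cperp dotpBr dotpZr huu dotpC mulr1 subrr.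
set m := 1 - A * dotp c u in hm.
set v := u - etae *: cperp.
have hvv : dotp v v = 1 + (etae * enorm cperp) ^+ 2.
  rewrite /v dotpBl !dotpBr !dotpZl !dotpZr huu hcp (dotpC cperp u) hcp.
  rewrite -enorm_sqr; ring.
have hv : enorm v = Num.sqrt (1 + (etae * enorm cperp) ^+ 2) by rewrite /enorm hvv.
have hv0 : 0 < enorm v.
  by rewrite hv sqrtr_gt0; have := sqr_ge0 (etae * enorm cperp); lra.
have hx1 : x k.+1 = (r * m) *: v.
  rewrite step hc hxu /v /cperp /etae /m /A.
  apply/rowP => j; rewrite !mxE.
  have := gt_eqF hr; have := gt_eqF hs; have := gt_eqF hm; rewrite /m /A => h1 h2 h3.
  have h4 : r ^+ 2 * s - eta k * dotp c u != 0.
    have -> : r ^+ 2 * s - eta k * dotp c u = (r ^+ 2 * s) * (1 - eta k / (r ^+ 2 * s) * dotp c u).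
      by field; rewrite h2 h3.
    by apply: mulf_neq0; [apply: mulf_neq0; [apply: expf_neq0; rewrite h3 | rewrite h2] | rewrite h1].
  by field; rewrite h2 h3 h4.
have v0 : v != 0.
  by apply: contraTneq hv0 => ->; rewrite enorm0 ltxx.
split.
  by rewrite hx1 scaler_eq0 negb_or mulf_neq0 ?gt_eqF.
move=> u'.
have hu' : u' = (enorm v)^-1 *: v.
  rewrite /u' hx1 enormZ scalerA gtr0_norm ?mulr_gt0 //; congr (_ *: _).
  by field; rewrite !gt_eqF.
split; first by rewrite hu' hv.
rewrite hu' hv /sphExp.
case: (eqVneq cperp 0) => [cp0|cp0].
  rewrite /v cp0 enorm0 !scaler0 oppr0 eqxx addr0 mulr0 expr0n addr0 sqrtr1.
  by rewrite invr1 scale1r.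
set z := etae * enorm cperp.
have hz : 0 < z by rewrite /z mulr_gt0 // enorm_gt0.
rewrite (gt_eqF hz) /=.
have hat : 0 < atan z by rewrite -atan0 lt_atan.
set w := - ((atan z / z * etae) *: cperp).
have hw : enorm w = atan z.
  have hp : 0 < atan z / z * etae by rewrite mulr_gt0 // divr_gt0.
  rewrite /w -scaleNr enormZ normrN (gtr0_norm hp).
  have -> : atan z / z * etae * enorm cperp = atan z / z * z by rewrite /z mulrA.
  by rewrite divfK // gt_eqF.
have w0 : w != 0.
  apply/eqP => wE; move: hw; rewrite wE enorm0 => h; by rewrite -h ltxx in hat.
rewrite (negbTE w0) hw cos_atan.
have hq : 0 < Num.sqrt (1 + z ^+ 2).
  by rewrite sqrtr_gt0; have := sqr_ge0 z; lra.
have hsin : sin (atan z) = z / Num.sqrt (1 + z ^+ 2).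
  rewrite -{2}[z]atanK /tan -cos_atan divfK // cos_atan invr_eq0 gt_eqF //.
rewrite hsin /w /v; apply/rowP => j; rewrite !mxE.
have := gt_eqF hz; have := gt_eqF hat; have := gt_eqF hq => h1 h2 h3.
by field; rewrite ?h1 ?h2 ?h3.
Qed.
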